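(* Let $G$ be a tournament and $v_1,\ldots,v_n$ a matching ordering of $G$. Suppose $\pi \in S_n$ is a permutation such that $v_{\pi(1)},\ldots,v_{\pi(n)}$ is also a matching ordering of $G$. Then $\{1,\ldots,n\}$ can be partitioned into sets $X_1,\ldots,X_r$, each a set of consecutive integers, such that: (1) $\pi = \sigma_1\sigma_2\cdots\sigma_r$, where for each $i$, $\sigma_i$ is one of $\sigma_{X_i}$, $\sigma_{X_i}^{-1}$, or $\tau_{X_i}$ (the last only when $|X_i|=4$); (2) for each $i$, $V_i=\{v_x : x\in X_i\}$ is a homogeneous set of $G$; (3) for each $i$, the subtournament $H_i$ induced on $V_i$ is either transitive or isomorphic to $P_{|V_i|}$; moreover, writing $X_i=\{b,\dots,a\}$ and $m=|X_i|$, the ordering $v_b,v_{b+1},\dots,v_a$ of $V_i$ satisfies: if $\sigma_i=\sigma_{X_i}$ then $H_i$ is transitive or isomorphic to $P_m$ and this ordering is $\pi_2 H_i$; if $\sigma_i=\sigma_{X_i}^{-1}$ then $H_i$ is transitive or isomorphic to $P_m$ and this ordering is $\pi_1 H_i$; if $\sigma_i=\tau_{X_i}$ then $H_i$ is isomorphic to $P_4$ and this ordering is $\pi_2 H_i$ or $\pi_2\pi_1 H_i$.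
   Context: A tournament is a finite, non-null, loopless directed graph in which for any two distinct vertices $u,v$ there is exactly one edge with both ends in $\{u,v\}$; write $u\to v$ for the edge from $u$ to $v$. A homogeneous set of $G$ is a set $X\subseteq V(G)$ such that each vertex outside $X$ either has edges to all of $X$ or edges from all of $X$. Given an ordering $v_1,\dots,v_n$ of $V(G)$, a backedge is an edge $v_j\to v_i$ with $j>i$; the ordering is a matching ordering if every vertex is the head or tail of at most one backedge. A tournament is transitive if it has an ordering $v_1,\dots,v_n$ with $v_i\to v_j$ whenever $i<j$ (its standard ordering). $P_m$ is the tournament on $v_1,\dots,v_m$ with $v_i\to v_j$ if $j-i\ge2$ and $v_{i+1}\to v_i$ for $1\le i\le m-1$; for $m\ne3$ such a defining ordering is unique. For $X=\{b,b+1,\dots,a\}$: if $|X|$ is odd, $\sigma_X$ is the cycle $(b\ b{+}2\ b{+}4\ \cdots\ a{-}2\ a\ a{-}1\ a{-}3\ \cdots\ b{+}1)$; if $|X|$ is even, $\sigma_X=(b\ b{+}2\ \cdots\ a{-}1\ a\ a{-}2\ \cdots\ b{+}1)$ (so $\sigma_X$ is the identity if $|X|=1$ and the transposition $(b\ a)$ if $|X|=2$), regarded as a permutation of $\{1,\dots,n\}$ fixing everything outside $X$; if $|X|=4$, $\tau_X=(b\ b{+}2)(b{+}1\ b{+}3)$. For a tournament $H$ on $m$ vertices that is transitive or isomorphic to $P_m$, let $u_1,\dots,u_m$ be its standard ordering (if transitive) or its defining $P_m$ ordering (if $m\ne3$), or some defining $P_3$ ordering (if $m=3$); then $\pi_1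 H$ is the ordering $u_2,u_1,u_4,u_3,\dots$ (swap $u_{2j-1},u_{2j}$ for all $j\le \lfloor m/2\rfloor$), $\pi_2 H$ is the ordering $u_1,u_3,u_2,u_5,u_4,\dots$ (swap $u_{2j},u_{2j+1}$ for all $j\le \lfloor m/2\rfloor-1$... i.e. for $1\le j$ with $2j+1\le m$), and for $H\cong P_4$, $\pi_2\pi_1 H$ is the ordering $u_2,u_4,u_1,u_3$. When $m=2$, any ordering counts as $\pi_1H$, $\pi_2H$. *)

(* Defs.v *)
From HB Require Import structures.
From Stdlib Require List.
From mathcomp Require Import all_boot all_fingroup.

Set Implicit Arguments.
Unset Strict Implicit.
Unset Printing Implicit Defensive.

(* Conventions: positions are 0-indexed, i.e. v_1,...,v_n of the paper is
   v : 'I_n -> T with v_{i} = v (i-1). *)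

Definition tournament (T : finType) (e : rel T) : Prop :=
  0 < #|T| /\ (forall u, ~~ e u u) /\
  (forall u w, u != w -> addb (e u w) (e w u)).

Definition matching_ordering (T : finType) (e : rel T) (n : nat)
    (v : 'I_n -> T) : Prop :=
  bijective v /\
  forall k : 'I_n,
    #|[set l : 'I_n | ((l < k) && e (v k) (v l)) || ((k < l) && e (v l) (v k))]|
      <= 1.

Definition homogeneous (T : finType) (e : rel T) (X : {set T}) : Prop :=
  forall y, y \notin X ->
    (forall x, x \in X -> e y x) \/ (forall x, x \in X -> e x y).

Definition ordering_of (T : finType) (V : {set T}) (m : nat) (u : 'I_m -> T) :
  Prop := injective u /\ [set u k | k : 'I_m] = V.

Definition std_transitive (T : finType) (e : rel T) (m : nat) (u : 'I_m -> T) :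
  Prop := forall i j : 'I_m, i < j -> e (u i) (u j).

Definition P_ordering (T : finType) (e : rel T) (m : nat) (u : 'I_m -> T) :
  Prop := forall i j : 'I_m, e (u i) (u j) = (i.+2 <= j) || (i == j.+1 :> nat).

Definition at_ (T : Type) (n : nat) (f : 'I_n -> T) (k : nat) : option T :=
  omap f (insub k : option 'I_n).

(* index maps (0-indexed) realizing pi_1, pi_2 and pi_2 pi_1:
   the ordering pi_x H is  k |-> u_(swap k)  for k < m *)
Definition swap1 (m k : nat) : nat :=
  if odd k then k.-1 else if k.+1 < m then k.+1 else k.
Definition swap2 (m k : nat) : nat :=
  if odd k then (if k.+1 < m then k.+1 else k)
  else (if 0 < k then k.-1 else k).
Definition swap21 (k : nat) : nat := nth k [:: 1; 3; 0; 2] k.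

(* sigma_X for X = {b, ..., b+m-1}: the cycle
   (b b+2 b+4 ... (evens increasing) ... (odds decreasing) ... b+1),
   written as the cyclic sequence; path.next/prev give the permutation
   and its inverse (identity outside X). *)
Definition sigma_seq (b m : nat) : seq nat :=
  [seq b + 2 * i | i <- iota 0 (m.+1)./2] ++
  rev [seq b + 2 * i + 1 | i <- iota 0 m./2].
Definition sigma_fun (b m : nat) (x : nat) : nat := next (sigma_seq b m) x.
Definition sigma_inv_fun (b m : nat) (x : nat) : nat := prev (sigma_seq b m) x.
(* tau_X = (b b+2)(b+1 b+3) *)
Definition tau_fun (b : nat) (x : nat) : nat :=
  if (b <= x) && (x < b + 4) then b + (x - b + 2) %% 4 else x.

Inductive skind := KSig | KSigInv | KTau.

(* a block X = {bstart, ..., bstart + bsize - 1} together with the choice of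
   sigma_i among sigma_X, sigma_X^{-1}, tau_X *)
Record block := Block { bstart : nat; bsize : nat; bkind : skind }.

Definition in_block (B : block) (x : nat) : bool :=
  (bstart B <= x) && (x < bstart B + bsize B).

Definition block_fun (B : block) : nat -> nat :=
  match bkind B with
  | KSig => sigma_fun (bstart B) (bsize B)
  | KSigInv => sigma_inv_fun (bstart B) (bsize B)
  | KTau => tau_fun (bstart B)
  end.

Definition block_set (T : finType) (n : nat) (v : 'I_n -> T) (B : block) :
  {set T} := v @: [set j : 'I_n | in_block B j].

(* condition (3) (and the size restriction for tau in (1)) *)
Definition block_cond (T : finType) (e : rel T) (n : nat) (v : 'I_n -> T)
    (B : block) : Prop :=
  let b := bstart B in let m := bsize B in
  match bkind B with
  | KSig => exists u : 'I_m -> T,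
      ordering_of (block_set v B) u /\
      (std_transitive e u \/ P_ordering e u) /\
      (forall k, k < m -> at_ v (b + k) = at_ u (swap2 m k))
  | KSigInv => exists u : 'I_m -> T,
      ordering_of (block_set v B) u /\
      (std_transitive e u \/ P_ordering e u) /\
      (forall k, k < m -> at_ v (b + k) = at_ u (swap1 m k))
  | KTau => m = 4 /\ exists u : 'I_m -> T,
      ordering_of (block_set v B) u /\ P_ordering e u /\
      ((forall k, k < m -> at_ v (b + k) = at_ u (swap2 m k)) \/
       (forall k, k < m -> at_ v (b + k) = at_ u (swap21 k)))
  end.

(* Main.v *)
Require Import Defs.
From Stdlib Require List.
From mathcomp Require Import all_boot all_fingroup.
From mathcomp Require Import zify.
Set Implicit Arguments.
Unset Strict Implicit.
Ltac arith := repeat match goal with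
  | |- context [if ?c then _ else _] =>
      lazymatch c with context [if _ then _ else _] => fail | _ => case: (boolP c) => ? end
  end; lia.
Definition sigf (m r : nat) : nat :=
  if odd r then (if r == 1 then 0 else r - 2)
  else (if r.+2 < m then r.+2 else if r.+1 < m then r.+1 else r.-1).
Definition sigif (m r : nat) : nat :=
  if r == 0 then (if 1 < m then 1 else 0)
  else if odd r then (if r.+2 < m then r.+2 else if r.+1 < m then r.+1 else r.-1)
  else r - 2.
Definition tauf (r : nat) : nat := (r + 2) %% 4.
Definition inv21 (k : nat) : nat := nth k [:: 2; 0; 3; 1] k.

Lemma sigf_lt m r : r < m -> sigf m r < m. Proof. rewrite /sigf; arith. Qed.
Lemma sigif_lt m r : r < m -> sigif m r < m. Proof. rewrite /sigif; arith. Qed.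
Lemma sigfK m r : r < m -> sigif m (sigf m r) = r. Proof. rewrite /sigf /sigif. arith. Qed.
Lemma sigifK m r : r < m -> sigf m (sigif m r) = r. Proof. rewrite /sigf /sigif. arith. Qed.
Lemma swap2_lt m r : r < m -> swap2 m r < m. Proof. rewrite /swap2; arith. Qed.
Lemma swap1_lt m r : r < m -> swap1 m r < m. Proof. rewrite /swap1; arith. Qed.
Lemma swap2K m r : r < m -> swap2 m (swap2 m r) = r. Proof. rewrite /swap2; arith. Qed.
Lemma swap1K m r : r < m -> swap1 m (swap1 m r) = r. Proof. rewrite /swap1; arith. Qed.

Lemma sig_adj m i : i.+1 < m ->
  let a := swap2 m i in let c := swap2 m i.+1 in
  ((a < c) && (sigif m c < sigif m a)) || ((c < a) && (sigif m a < sigif m c)).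
Proof. rewrite /= /swap2 /sigif. arith. Qed.
Lemma sig_far m i j : i.+2 <= j -> j < m ->
  swap2 m i < swap2 m j /\ sigif m (swap2 m i) < sigif m (swap2 m j).
Proof. rewrite /swap2 /sigif. arith. Qed.
Lemma sig_alt m i : i.+2 < m ->
  (swap2 m i < swap2 m i.+1) = ~~ (swap2 m i.+1 < swap2 m i.+2).
Proof. rewrite /swap2. arith. Qed.
Lemma sigi_adj m i : i.+1 < m ->
  let a := swap1 m i in let c := swap1 m i.+1 in
  ((a < c) && (sigf m c < sigf m a)) || ((c < a) && (sigf m a < sigf m c)).
Proof. rewrite /= /swap1 /sigf. arith. Qed.
Lemma sigi_far m i j : i.+2 <= j -> j < m ->
  swap1 m i < swap1 m j /\ sigf m (swap1 m i) < sigf m (swap1 m j).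
Proof. rewrite /swap1 /sigf. arith. Qed.
Lemma sigi_alt m i : i.+2 < m ->
  (swap1 m i < swap1 m i.+1) = ~~ (swap1 m i.+1 < swap1 m i.+2).
Proof. rewrite /swap1. arith. Qed.

Definition Fs (m i : nat) : nat :=
  if i < (m.+1) %/ 2 then 2 * i else 2 * (m %/ 2 - 1 - (i - (m.+1) %/ 2)) + 1.
Definition Gs (m r : nat) : nat :=
  if odd r then (m.+1) %/ 2 + (m %/ 2 - 1 - r %/ 2) else r %/ 2.

Lemma Fs_lt m i : i < m -> Fs m i < m. Proof. rewrite /Fs; arith. Qed.
Lemma Gs_lt m r : r < m -> Gs m r < m. Proof. rewrite /Gs; arith. Qed.
Lemma FsG m r : r < m -> Fs m (Gs m r) = r. Proof. rewrite /Fs /Gs; arith. Qed.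
Lemma Fs_inj m i j : i < m -> j < m -> Fs m i = Fs m j -> i = j.
Proof. rewrite /Fs; arith. Qed.
Lemma Fs_next m i : i < m -> sigf m (Fs m i) = Fs m (if i.+1 < m then i.+1 else 0).
Proof. rewrite /Fs /sigf; arith. Qed.

Lemma sigma_seq_size b m : size (sigma_seq b m) = m.
Proof. rewrite /sigma_seq size_cat size_rev !size_map !size_iota -!divn2; lia. Qed.

Lemma sigma_seq_nth b m i : i < m -> nth 0 (sigma_seq b m) i = b + Fs m i.
Proof.
move=> im; rewrite /sigma_seq nth_cat size_map size_iota -!divn2 /Fs.
case: ifP => h1.
  by rewrite (nth_map 0) ?size_iota -?divn2 // nth_iota ?add0n // -?divn2.
rewrite nth_rev size_map size_iota -?divn2; last lia.
rewrite (nth_map 0) ?size_iota -?divn2; last lia.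
rewrite nth_iota -?divn2; last lia.
lia.
Qed.

Lemma sigma_seq_uniq b m : uniq (sigma_seq b m).
Proof.
apply/(uniqP 0) => i j; rewrite !inE sigma_seq_size => im jm.
rewrite !sigma_seq_nth // => /addnI H.
exact: (Fs_inj im jm H).
Qed.

Lemma sigma_seq_mem b m x : (x \in sigma_seq b m) = (b <= x < b + m).
Proof.
apply/idP/idP.
  move/(nthP 0) => [i]; rewrite sigma_seq_size => im <-.
  rewrite sigma_seq_nth //; have := Fs_lt im; lia.
move=> h; have r_lt : x - b < m by lia.
have -> : x = nth 0 (sigma_seq b m) (Gs m (x - b)).
  by rewrite sigma_seq_nth ?Gs_lt // FsG //; lia.
by apply: mem_nth; rewrite sigma_seq_size Gs_lt.
Qed.

Lemma sigma_fun_in b m x : b <= x < b + m -> sigma_fun b m x = b + sigf m (x - b).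
Proof.
move=> h; have r_lt : x - b < m by lia.
set i := Gs m (x - b).
have im : i < m by exact: Gs_lt.
have xE : x = nth 0 (sigma_seq b m) i by rewrite sigma_seq_nth // FsG //; lia.
rewrite /sigma_fun next_nth sigma_seq_mem h.
have : index x (sigma_seq b m) = i.
  by rewrite xE index_uniq ?sigma_seq_size ?sigma_seq_uniq.
have -> : x - b = Fs m i by rewrite /i FsG.
case E: (sigma_seq b m) => [|y p] ix.
  by have := sigma_seq_size b m; rewrite E /=; lia.
rewrite ix Fs_next //.
have sz : size (y :: p) = m by rewrite -E sigma_seq_size.
case: ifP => hi.
  rewrite (set_nth_default 0); last by move: sz => /= ?; lia.
  have -> : nth 0 p i = nth 0 (y :: p) i.+1 by [].
  by rewrite -E sigma_seq_nth.
rewrite nth_default; last by move: sz => /= ?; lia.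
have -> : y = nth 0 (y :: p) 0 by [].
rewrite -E sigma_seq_nth //; lia.
Qed.

Lemma sigma_fun_out b m x : ~~ (b <= x < b + m) -> sigma_fun b m x = x.
Proof. by move=> h; rewrite /sigma_fun next_nth sigma_seq_mem (negbTE h). Qed.
Lemma sigma_inv_fun_out b m x : ~~ (b <= x < b + m) -> sigma_inv_fun b m x = x.
Proof. by move=> h; rewrite /sigma_inv_fun prev_nth sigma_seq_mem (negbTE h). Qed.

Lemma sigma_inv_fun_in b m x : b <= x < b + m -> sigma_inv_fun b m x = b + sigif m (x - b).
Proof.
move=> h; have r_lt : x - b < m by lia.
have y_in : b <= b + sigif m (x - b) < b + m by have := sigif_lt r_lt; lia.
have : sigma_fun b m (b + sigif m (x - b)) = x.
  by rewrite sigma_fun_in // addKn sigifK //; lia.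
rewrite /sigma_inv_fun /sigma_fun => Hx.
by rewrite -{1}Hx (prev_next (sigma_seq_uniq b m)).
Qed.

Lemma tau_fun_in b x : b <= x < b + 4 -> tau_fun b x = b + tauf (x - b).
Proof. by move=> h; rewrite /tau_fun h. Qed.
Lemma tau_fun_out b x : ~~ (b <= x < b + 4) -> tau_fun b x = x.
Proof. by move=> h; rewrite /tau_fun (negbTE h). Qed.

Set Default Proof Using "All".

Section Comb.
Variables (n : nat) (q qi : nat -> nat) (E : nat -> nat -> bool).
Hypothesis Hq : forall k, k < n -> q k < n.
Hypothesis Hqi : forall y, y < n -> qi y < n.
Hypothesis Hqqi : forall y, y < n -> q (qi y) = y.
Hypothesis Hqiq : forall k, k < n -> qi (q k) = k.
Hypothesis Htour : forall x y, x < n -> y < n -> x != y -> E x y = ~~ E y x.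
Hypothesis Hirr : forall x, x < n -> ~~ E x x.

Definition bk x y := (y < x) && E x y || (x < y) && E y x.
Definition bk' x y := (qi y < qi x) && E x y || (qi x < qi y) && E y x.
Definition inv x y := (x < y) && (qi y < qi x) || (y < x) && (qi x < qi y).

Hypothesis HM : forall x y z, x < n -> y < n -> z < n -> bk x y -> bk x z -> y = z.
Hypothesis HM' : forall x y z, x < n -> y < n -> z < n -> bk' x y -> bk' x z -> y = z.

Lemma qi_inj x y : x < n -> y < n -> qi x = qi y -> x = y.
Proof. by move=> xn yn h; rewrite -(Hqqi xn) -(Hqqi yn) h. Qed.

Lemma inv_neq x y : inv x y -> x != y.
Proof. rewrite /inv => /orP[] /andP[h _]; apply/eqP => e; subst; lia. Qed.

Lemma inv_sym x y : inv x y = inv y x.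
Proof. by rewrite /inv orbC. Qed.
Lemma bk_sym x y : bk x y = bk y x.
Proof. by rewrite /bk orbC. Qed.
Lemma bk'_sym x y : bk' x y = bk' y x.
Proof. by rewrite /bk' orbC. Qed.

Lemma inv_bk x y : x < n -> y < n -> inv x y -> bk x y = ~~ bk' x y.
Proof.
move=> xn yn hi; have nxy := inv_neq hi.
have ht := Htour xn yn nxy.
move: hi; rewrite /inv /bk /bk' => /orP[] /andP[h1 h2].
  have -> : (y < x) = false by lia.
  have -> : (qi x < qi y) = false by lia.
  by rewrite h1 h2 ht /=; case: (E y x).
have -> : (x < y) = false by lia.
have -> : (qi y < qi x) = false by lia.
by rewrite h1 h2 /= ht; case: (E y x).
Qed.

Lemma ninv_bk x y : x < n -> y < n -> x != y -> ~~ inv x y -> bk x y = bk' x y.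
Proof.
move=> xn yn nxy hi.
have nq : qi x != qi y by apply/eqP => /(qi_inj xn yn) e; rewrite e eqxx in nxy.
move: hi; rewrite /inv /bk /bk' negb_or !negb_and.
have : (x < y) || (y < x) by move: nxy; case: ltngtP.
have : (qi x < qi y) || (qi y < qi x) by move: nq; case: ltngtP.
case: ltngtP => // h1 _; case: ltngtP => // h2 _ /= /andP[];
  rewrite ?h1 ?h2 /=; try lia; move=> *; rewrite ?andbF ?orbF //.
Qed.

Lemma dclass x y z : x < n -> y < n -> z < n -> y != z ->
  inv x y -> inv x z -> bk x y != bk x z.
Proof.
move=> xn yn zn dyz iy iz.
have ey := inv_bk xn yn iy; have ez := inv_bk xn zn iz.
case By: (bk x y) ey => ey; case Bz: (bk x z) ez => ez //=.
  by rewrite (HM xn yn zn By Bz) eqxx in dyz.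
have c1 : bk' x y by move: ey; case: (bk' x y).
have c2 : bk' x z by move: ez; case: (bk' x z).
by rewrite (HM' xn yn zn c1 c2) eqxx in dyz.
Qed.

Lemma L3 x y1 y2 y3 : x < n -> y1 < n -> y2 < n -> y3 < n ->
  y1 != y2 -> y1 != y3 -> y2 != y3 -> inv x y1 -> inv x y2 -> inv x y3 -> False.
Proof.
move=> xn n1 n2 n3 d12 d13 d23 i1 i2 i3.
have := dclass xn n1 n2 d12 i1 i2; have := dclass xn n1 n3 d13 i1 i3.
have := dclass xn n2 n3 d23 i2 i3.
by case: (bk x y1); case: (bk x y2); case: (bk x y3).
Qed.

Lemma tri x y z : x < n -> y < n -> z < n -> inv x y -> inv x z -> inv y z -> False.
Proof.
move=> xn yn zn ixy ixz iyz.
have dyz := inv_neq iyz.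
have dxz := inv_neq ixz.
have dxy := inv_neq ixy.
have := dclass xn yn zn dyz ixy ixz.
have iyx : inv y x by rewrite inv_sym.
have izx : inv z x by rewrite inv_sym.
have izy : inv z y by rewrite inv_sym.
have := dclass yn xn zn dxz iyx iyz.
have := dclass zn xn yn (dxy) izx izy.
rewrite (bk_sym y x) (bk_sym z x) (bk_sym z y).
by case: (bk x y); case: (bk x z); case: (bk y z).
Qed.

Lemma qi_next y c : y < n -> c <= qi y -> q c != y -> c.+1 <= qi y.
Proof.
move=> yn h1 h2; rewrite ltn_neqAle h1 andbT; apply/eqP => e.
by rewrite e Hqqi ?eqxx in h2.
Qed.

Lemma qiE k y : k < n -> q k = y -> qi y = k.
Proof. by move=> kn <-; rewrite Hqiq. Qed.

Lemma invP x y : x < y -> qi y < qi x -> inv x y.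
Proof. by move=> h1 h2; rewrite /inv h1 h2. Qed.

Definition pat (s : bool) r :=
  if s then (if r == 0 then 1 else if odd r then r.+2 else r - 2)
  else (if odd r then (if r == 1 then 0 else r - 2) else r.+2).
Definition fs (s : bool) m := if s then sigif m else sigf m.
Definition kind (s : bool) := if s then KSigInv else KSig.
Definition fK K m := match K with KSig => sigf m | KSigInv => sigif m | KTau => tauf end.

Lemma fK_kind s m : fK (kind s) m = fs s m. Proof. by case: s. Qed.

Lemma pat_end1 s R r : s = odd R -> (s || (2 <= R)) -> 1 <= R ->
  r <= R -> fs s R.+1 r = if r == R then R - 1 else pat s r.
Proof. move=> -> h1 h2 h3; rewrite /fs /pat /sigf /sigif; arith. Qed.
Lemma pat_end2 s R r : s = odd R -> (s || (2 <= R)) -> 1 <= R ->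
  r <= R.+1 -> fs s R.+2 r = if r == R then R.+1 else if r == R.+1 then R - 1 else pat s r.
Proof. move=> -> h1 h2 h3; rewrite /fs /pat /sigf /sigif; arith. Qed.
Lemma pat_step s R : s = odd R -> (s || (2 <= R)) -> 1 <= R ->
  pat s R = R.+2 /\ pat s R.+1 = R - 1.
Proof. move=> -> h1 h2; rewrite /pat; arith. Qed.

Section Start.
Variable b : nat.
Hypothesis Hf1 : forall k, k < b -> q k < b.
Hypothesis Hf2 : forall y, y < b -> qi y < b.

Lemma q_geb k : b <= k -> k < n -> b <= q k.
Proof.
move=> h1 h2; rewrite leqNgt; apply/negP => /Hf2; rewrite Hqiq //; lia.
Qed.
Lemma qi_geb y : b <= y -> y < n -> b <= qi y.
Proof.
move=> h1 h2; rewrite leqNgt; apply/negP => /Hf1; rewrite Hqqi //; lia.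
Qed.

Definition Blk K m := 0 < m /\ b + m <= n /\ (K = KTau -> m = 4) /\
  forall r, r < m -> q (b + r) = b + fK K m r.

Definition Inv c l h := (forall k, b <= k < c -> q k != l /\ q k <= h) /\
  (forall y, b <= y < c -> y != l -> qi y < c) /\ qi h < c.

Lemma Inv_qi c l h y : Inv c l h -> b <= y -> y < n -> (y = l \/ h < y) -> c <= qi y.
Proof.
move=> [I1 _] h1 h2 h3; rewrite leqNgt; apply/negP => hc.
have hb := qi_geb h1 h2.
have [/eqP A B] := I1 (qi y) (introT andP (conj hb hc)).
rewrite Hqqi // in A B; case: h3 => [e|lt]; [exact: A | lia].
Qed.

Lemma Inv_next c l h : Inv c l h -> c < n -> b <= c -> q c = l \/ (c <= q c /\ q c != h).
Proof.
move=> [_ [I2 I3]] cn bc.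
have xb := q_geb bc cn.
case: (eqVneq (q c) l) => [->|nl]; first by left.
right; split.
  rewrite leqNgt; apply/negP => lt.
  have := I2 (q c) (introT andP (conj xb lt)) nl; rewrite Hqiq //; lia.
apply/eqP => e; move: I3; rewrite -e Hqiq //; lia.
Qed.

Lemma qinj k l : k < n -> l < n -> q k = q l -> k = l.
Proof. by move=> kn ln e; rewrite -(Hqiq kn) -(Hqiq ln) e. Qed.

Lemma chain fuel : forall c, n - c <= fuel -> b < c -> c < n -> Inv c c.-1 c ->
  (forall k, b <= k < c -> q k = b + pat (odd (c - b)) (k - b)) ->
  (odd (c - b) || (2 <= c - b)) ->
  exists m, Blk (kind (odd (c - b))) m.
Proof.
elim: fuel => [|fuel IH] c hf bc cn Ic Hpat Hpar; first lia.
have cb : b <= c by lia.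
have [I1 [I2 I3]] := Ic.
have l_n : c.-1 < n by lia.
have qil0 : c <= qi c.-1 by apply: (Inv_qi Ic) => //; [lia | left].
have [xl | [xc xh]] := Inv_next Ic cn cb.
  exists (c - b).+1; split; first by [].
  split; first lia.
  split; first by case: (odd (c - b)).
  move=> r hr; rewrite fK_kind (@pat_end1 _ (c - b)) //; try lia.
  case: eqP => [er|ner].
    by rewrite er subnKC // xl; lia.
  rewrite Hpat; last lia.
  by rewrite addKn.
set x := q c in xc xh.
have xn : x < n by exact: Hq.
have qix : qi x = c by rewrite /x Hqiq.
have qil1 : c.+1 <= qi c.-1 by apply: qi_next => //; apply/eqP; rewrite /x; lia.
have hx : c.+1 <= x by rewrite ltn_neqAle xc andbT eq_sym.
case: (ltngtP x c.+2) => hx2.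
-
  have ex : x = c.+1 by lia.
  have c1n : c.+1 < n by lia.
  set y := q c.+1.
  have yn : y < n by exact: Hq.
  have qiy : qi y = c.+1 by rewrite /y Hqiq.
  have yb : b <= y by apply: q_geb; lia.
  case: (eqVneq y c.-1) => [yl|ynl].
    exists (c - b).+2; split; first by [].
    split; first lia.
    split; first by case: (odd (c - b)).
    move=> r hr; rewrite fK_kind (@pat_end2 _ (c - b)) //; try lia.
    case: eqP => [er|ner].
      by rewrite er subnKC // -/x ex; lia.
    case: eqP => [er|ner2].
      rewrite er; have -> : b + (c - b).+1 = c.+1 by lia.
      by rewrite -/y yl; lia.
    rewrite Hpat; last lia.
    by rewrite addKn.
  exfalso.
  have yc2 : c.+2 <= y.
    case: (ltngtP y c) => hyc.
    - have := I2 y (introT andP (conj yb hyc)) ynl; lia.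
    - case: (ltngtP y c.+1) => hyc1; first lia.
        by [].
      by have := qinj c1n cn; rewrite -/x -/y hyc1 ex => /(_ erefl); lia.
    - by move: I3; rewrite -hyc qiy; lia.
  have qil2 : c.+2 <= qi c.-1 by apply: qi_next => //; apply/eqP; rewrite -/y; lia.
  have cn' : c < n by [].
  have qic : qi c < c by [].
  have qic1 : qi c.+1 = c by rewrite -ex qix.
  apply: (@L3 c.-1 c c.+1 y) => //; try (apply/eqP; lia);
    apply: invP; lia.
-
  exfalso.
  have c1n : c.+1 < n by lia.
  have c2n : c.+2 < n by lia.
  have q1 : c <= qi c.+1 by apply: (Inv_qi Ic) => //; [lia | right].
  have q2 : c <= qi c.+2 by apply: (Inv_qi Ic) => //; [lia | right; lia].
  have q1' : c.+1 <= qi c.+1 by apply: qi_next => //; apply/eqP; rewrite -/x; lia.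
  have q2' : c.+1 <= qi c.+2 by apply: qi_next => //; apply/eqP; rewrite -/x; lia.
  apply: (@L3 x c.-1 c.+1 c.+2) => //; try (apply/eqP; lia);
    rewrite inv_sym; apply: invP; lia.
-
  have c1n : c.+1 < n by lia.
  set y := q c.+1.
  have yn : y < n by exact: Hq.
  have qiy : qi y = c.+1 by rewrite /y Hqiq.
  have yb : b <= y by apply: q_geb; lia.
  have yx : y != x by apply/eqP => e; have := qinj c1n cn e; lia.
  case: (eqVneq y c.-1) => [yl|ynl].
    have Ic2 : Inv c.+2 c.+2.-1 c.+2.
      split; [|split].
      - move=> k hk; case: (ltngtP k c) => hkc.
        + have [A B] := I1 k (introT andP (conj (proj1 (andP hk)) hkc)).
          split; last lia. by apply/eqP; move: A B => /eqP; lia.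
        + have hkc1 : k = c.+1 by lia.
          by rewrite hkc1 -/y yl; split; [apply/eqP|]; lia.
        + by rewrite hkc -/x -hx2; split; [apply/eqP|]; lia.
      - move=> y' hy' ny'; case: (eqVneq y' c.-1) => [->|n1].
          by rewrite -yl qiy; lia.
        case: (eqVneq y' c) => [->|n2]; first lia.
        have := I2 y' (introT andP (conj (proj1 (andP hy')) _)) n1.
        move=> H; have : y' < c by lia.
        by move/H; lia.
      - by rewrite -hx2 qix; lia.
    have par : odd (c.+2 - b) = odd (c - b).
      have e2 : c.+2 - b = (c - b).+2 by lia.
      by rewrite e2 /= negbK.
    rewrite -par; apply: IH => //; try lia.
      move=> k hk; rewrite par.
      have [P1 P2] := @pat_step (odd (c - b)) (c - b) erefl Hpar ltac:(lia).
      case: (ltngtP k c) => hkc.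
      - by apply: Hpat; lia.
      - have -> : k = c.+1 by lia.
        rewrite -/y yl; have -> : c.+1 - b = (c - b).+1 by lia.
        rewrite P2; lia.
      - by rewrite hkc -/x P1; lia.
  exfalso.
  have yc : c <= y.
    rewrite leqNgt; apply/negP => hyc.
    by have := I2 y (introT andP (conj yb hyc)) ynl; lia.
  have yc' : y != c by apply/eqP => e; move: I3; rewrite -e qiy; lia.
  have qil2 : c.+2 <= qi c.-1 by apply: qi_next => //; apply/eqP; rewrite -/y; lia.
  have qic2 : qi c.+2 = c by rewrite -hx2 qix.
  case: (eqVneq y c.+1) => [yc1|yc1].
    have qic1 : qi c.+1 = c.+1 by rewrite -yc1 qiy.
    apply: (@tri c.-1 c.+1 c.+2) => //; try lia; apply: invP; lia.
  have yc3 : c.+3 <= y by move: yx yc1 yc'; rewrite -hx2; lia.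
  apply: (@L3 c.-1 c c.+2 y) => //; try (apply/eqP; lia); try lia;
    apply: invP; lia.
Qed.

Lemma start : b < n -> exists K m, Blk K m.
Proof.
move=> bn.
set x := q b.
have xn : x < n by exact: Hq.
have xb : b <= x by apply: q_geb.
have qix : qi x = b by rewrite /x Hqiq.
case: (ltngtP x b.+1) => hx1.
-
  have xe : x = b by lia.
  exists KSig, 1; split => //; split; first lia; split => // r hr.
  have -> : r = 0 by lia.
  by rewrite addn0 -/x xe.
- case: (ltngtP x b.+2) => hx2.
  + lia.
  +
    exfalso.
    have b1 : b.+1 < n by lia.
    have b2 : b.+2 < n by lia.
    have g0 : b <= qi b by apply: qi_geb.
    have g1 : b <= qi b.+1 by apply: qi_geb; lia.
    have g2 : b <= qi b.+2 by apply: qi_geb; lia.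
    have g0' : b.+1 <= qi b by apply: qi_next => //; apply/eqP; rewrite -/x; lia.
    have g1' : b.+1 <= qi b.+1 by apply: qi_next => //; apply/eqP; rewrite -/x; lia.
    have g2' : b.+1 <= qi b.+2 by apply: qi_next => //; apply/eqP; rewrite -/x; lia.
    apply: (@L3 x b b.+1 b.+2) => //; try (apply/eqP; lia);
      rewrite inv_sym; apply: invP; lia.
  +
    have b1 : b.+1 < n by lia.
    set y := q b.+1.
    have yn : y < n by exact: Hq.
    have yb : b <= y by apply: q_geb; lia.
    have qiy : qi y = b.+1 by rewrite /y Hqiq.
    have yx : y != x by apply/eqP => e; have := qinj b1 bn e; lia.
    case: (ltngtP y b.+1) => hy1.
    *
      have ye : y = b by lia.
      have := @chain n b.+2 ltac:(lia) ltac:(lia) ltac:(lia).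
      have par : odd (b.+2 - b) = false by have -> : b.+2 - b = 2 by lia.
      rewrite par => H; have [m Hm] : exists m, Blk (kind false) m.
        apply: H.
        - split; [|split].
          + move=> k hk; have [->|->] : k = b \/ k = b.+1 by lia.
              by rewrite -/x hx2; split; [apply/eqP|]; lia.
            by rewrite -/y ye; split; [apply/eqP|]; lia.
          + move=> y' hy' ny'; have -> : y' = b by lia.
            by rewrite -ye qiy.
          + by rewrite -{1}hx2 qix.
        - move=> k hk; have [->|->] : k = b \/ k = b.+1 by lia.
            by rewrite -/x hx2 subnn /pat /=; lia.
          by rewrite -/y ye subSnn /pat /=; lia.
        - lia.
      by exists (kind false), m.
    * case: (ltngtP y b.+3) => hy3.
      -- exfalso; move: yx; rewrite hx2; apply/negP; apply/negPn/eqP; lia.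
      --
         exfalso.
         have b3 : b.+3 < n by lia.
         have g0 : b.+2 <= qi b.
           apply: qi_next => //; last by apply/eqP; rewrite -/y; lia.
           apply: qi_next => //; last by apply/eqP; rewrite -/x; lia.
           exact: qi_geb.
         have g1 : b.+2 <= qi b.+1.
           apply: qi_next => //; last by apply/eqP; rewrite -/y; lia.
           apply: qi_next => //; last by apply/eqP; rewrite -/x; lia.
           by apply: qi_geb; lia.
         have g3 : b.+2 <= qi b.+3.
           apply: qi_next => //; last by apply/eqP; rewrite -/y; lia.
           apply: qi_next => //; last by apply/eqP; rewrite -/x; lia.
           by apply: qi_geb; lia.
         apply: (@L3 y b b.+1 b.+3) => //; try (apply/eqP; lia);
           rewrite inv_sym; apply: invP; lia.
      -- (* y = b+3 : tau *)
         have b2 : b.+2 < n by lia.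
         set z := q b.+2.
         have zn : z < n by exact: Hq.
         have zb : b <= z by apply: q_geb; lia.
         have qiz : qi z = b.+2 by rewrite /z Hqiq.
         have zx : z != x by apply/eqP => e; have := qinj b2 bn e; lia.
         have zy : z != y by apply/eqP => e; have := qinj b2 b1 e; lia.
         have q2 : qi b.+2 = b by rewrite -hx2 qix.
         have q3 : qi b.+3 = b.+1 by rewrite -hy3 qiy.
         have g1 : b.+2 <= qi b.+1.
           apply: qi_next => //; last by apply/eqP; rewrite -/y; lia.
           apply: qi_next => //; last by apply/eqP; rewrite -/x; lia.
           by apply: qi_geb; lia.
         case: (ltngtP z b.+1) => hz1.
         ++
            have ze : z = b by lia.
            have b3 : b.+3 < n by lia.
            set w := q b.+3.
            have wn : w < n by exact: Hq.
            have wb : b <= w by apply: q_geb; lia.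
            have qiw : qi w = b.+3 by rewrite /w Hqiq.
            have wx : w != x by apply/eqP => e; have := qinj b3 bn e; lia.
            have wy : w != y by apply/eqP => e; have := qinj b3 b1 e; lia.
            have wz : w != z by apply/eqP => e; have := qinj b3 b2 e; lia.
            case: (ltngtP w b.+1) => hw1.
            ** lia.
            ** exfalso.
               have g1' : b.+4 <= qi b.+1.
                 apply: qi_next => //; last by apply/eqP; rewrite -/w; lia.
                 apply: qi_next => //; last by apply/eqP; rewrite -/z; lia.
               apply: (@L3 b.+1 b.+2 b.+3 w) => //; try (apply/eqP; lia);
                 apply: invP; lia.
            ** exists KTau, 4; split => //; split; first lia; split => // r hr.
               have [->|[->|[->|->]]] : r = 0 \/ r = 1 \/ r = 2 \/ r = 3 by lia.
               --- by rewrite addn0 -/x hx2 /= /tauf /=; lia.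
               --- by rewrite addn1 -/y hy3 /= /tauf /=; lia.
               --- by rewrite (_ : b + 2 = b.+2) ?addn2 // -/z ze /= /tauf /=; lia.
               --- by rewrite (_ : b + 3 = b.+3) ?addn3 // -/w hw1 /= /tauf /=; lia.
         ++ exfalso.
            have g1' : b.+3 <= qi b.+1.
              by apply: qi_next => //; apply/eqP; rewrite -/z; lia.
            apply: (@L3 b.+1 b.+2 b.+3 z) => //; try (apply/eqP; lia); try lia;
              apply: invP; lia.
         ++
            exfalso.
            have q1 : qi b.+1 = b.+2 by rewrite -{1}hz1 qiz.
            have g0 : b.+3 <= qi b.
              apply: qi_next => //; last by apply/eqP; rewrite -/z; lia.
              apply: qi_next => //; last by apply/eqP; rewrite -/y; lia.
              apply: qi_next => //; last by apply/eqP; rewrite -/x; lia.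
              exact: qi_geb.
            apply: (@L3 b.+1 b b.+2 b.+3) => //; try (apply/eqP; lia); try lia.
            - by rewrite inv_sym; apply: invP; lia.
            - by apply: invP; lia.
            - by apply: invP; lia.
    *
      exfalso.
      have ye : y = b.+1 by lia.
      have g0 : b <= qi b by apply: qi_geb.
      have g0' : b.+1 <= qi b by apply: qi_next => //; apply/eqP; rewrite -/x; lia.
      have g0'' : b.+2 <= qi b by apply: qi_next => //; apply/eqP; rewrite -/y; lia.
      have q1 : qi b.+1 = b.+1 by rewrite -{1}ye qiy.
      have q2 : qi b.+2 = b by rewrite -hx2 qix.
      apply: (@tri b b.+1 b.+2) => //; try lia; apply: invP; lia.
-
  have := @chain n b.+1 ltac:(lia) ltac:(lia) ltac:(lia).
  have par : odd (b.+1 - b) = true by have -> : b.+1 - b = 1 by lia.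
  rewrite par => H; have [m Hm] : exists m, Blk (kind true) m.
    apply: H.
    - split; [|split].
      + move=> k hk; have -> : k = b by lia.
        by rewrite -/x hx1; split; [apply/eqP|]; lia.
      + move=> y' hy' ny'; lia.
      + by rewrite -{1}hx1 qix.
    - move=> k hk; have -> : k = b by lia.
      by rewrite -/x hx1 subnn /pat /=; lia.
    - lia.
  by exists (kind true), m.
Qed.

Definition fKi K m := match K with KSig => sigif m | KSigInv => sigf m | KTau => tauf end.

Lemma tauf_lt r : tauf r < 4. Proof. rewrite /tauf; lia. Qed.
Lemma taufK r : r < 4 -> tauf (tauf r) = r. Proof. rewrite /tauf; lia. Qed.

Lemma fK_lt K m r : (K = KTau -> m = 4) -> r < m -> fK K m r < m.
Proof.
case: K => /= h hr; [exact: sigf_lt | exact: sigif_lt | rewrite (h erefl); exact: tauf_lt].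
Qed.
Lemma fKi_lt K m r : (K = KTau -> m = 4) -> r < m -> fKi K m r < m.
Proof.
case: K => /= h hr; [exact: sigif_lt | exact: sigf_lt | rewrite (h erefl); exact: tauf_lt].
Qed.
Lemma fKK K m r : (K = KTau -> m = 4) -> r < m -> fK K m (fKi K m r) = r.
Proof.
case: K => /= h hr; [exact: sigifK | exact: sigfK | rewrite taufK // -(h erefl) //].
Qed.

Section Blk.
Variables (K : skind) (m : nat).
Hypothesis HB : Blk K m.

Lemma B_m : 0 < m. Proof. by case: HB. Qed.
Lemma B_n : b + m <= n. Proof. by case: HB => _ []. Qed.
Lemma B_tau : K = KTau -> m = 4. Proof. by case: HB => _ [_ []]. Qed.
Lemma B_q r : r < m -> q (b + r) = b + fK K m r. Proof. by case: HB => _ [_ [_ ]]; apply. Qed.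

Lemma B_qi s : s < m -> qi (b + s) = b + fKi K m s.
Proof.
move=> sm; apply: qiE.
  by have := B_n; have := fKi_lt B_tau sm; lia.
by rewrite B_q ?fKi_lt ?fKK //; exact: B_tau.
Qed.

Lemma B_fix1 k : k < b + m -> q k < b + m.
Proof.
move=> hk; case: (ltnP k b) => hb; first by have := Hf1 hb; lia.
have -> : k = b + (k - b) by lia.
rewrite B_q; last lia.
by have := @fK_lt K m (k - b) B_tau ltac:(lia); lia.
Qed.
Lemma B_fix2 y : y < b + m -> qi y < b + m.
Proof.
move=> hk; case: (ltnP y b) => hb; first by have := Hf2 hb; lia.
have -> : y = b + (y - b) by lia.
rewrite B_qi; last lia.
by have := @fKi_lt K m (y - b) B_tau ltac:(lia); lia.
Qed.
Lemma B_qi_ge x : b <= x -> x < n -> b <= qi x. Proof. exact: qi_geb. Qed.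

Lemma B_out_ge y : b + m <= y -> y < n -> b + m <= qi y.
Proof.
move=> h1 h2; rewrite leqNgt; apply/negP => /B_fix1; rewrite Hqqi //; lia.
Qed.

Lemma B_ninv x y : b <= x < b + m -> y < n -> ~~ (b <= y < b + m) -> ~~ inv x y.
Proof.
move=> hx yn hy.
have xn : x < n by have := B_n; lia.
have qx1 : qi x < b + m by apply: B_fix2; lia.
have qx2 : b <= qi x by apply: qi_geb; lia.
case: (ltnP y b) => hyb.
  have := Hf2 hyb; rewrite /inv; lia.
have : b + m <= y by lia.
move/B_out_ge => /(_ yn); rewrite /inv; lia.
Qed.

Lemma B_hom_partner :
  (forall x, b <= x < b + m -> exists2 z, b <= z < b + m & inv x z) ->
  forall y, y < n -> ~~ (b <= y < b + m) ->
    (forall x, b <= x < b + m -> E y x) \/ (forall x, b <= x < b + m -> E x y).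
Proof.
move=> Hp y yn hy.
have key : forall x, b <= x < b + m -> ~~ bk x y.
  move=> x hx; have [z hz iz] := Hp x hx.
  have xn : x < n by have := B_n; lia.
  have zn : z < n by have := B_n; lia.
  have ni := B_ninv hx yn hy.
  have nxy : x != y by apply/eqP => e; rewrite -e hx in hy.
  have e1 := ninv_bk xn yn nxy ni.
  have e2 := inv_bk xn zn iz.
  apply/negP => Bxy; move: e1; rewrite Bxy => /esym Bxy'.
  have nzy : z != y by apply/eqP => e; rewrite -e hz in hy.
  case Bxz: (bk x z) e2 => e2.
    by move: (HM xn zn yn Bxz Bxy) => e; rewrite e eqxx in nzy.
  have Bxz' : bk' x z by move: e2; case: (bk' x z).
  by move: (HM' xn zn yn Bxz' Bxy') => e; rewrite e eqxx in nzy.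
case: (ltnP y b) => hyb.
  left => x hx; have := key x hx; rewrite /bk.
  have xn : x < n by have := B_n; lia.
  have -> : (y < x) = true by lia.
  have -> : (x < y) = false by lia.
  rewrite /= orbF => nE; rewrite (Htour yn xn) //; last by apply/eqP; lia.
right => x hx; have := key x hx; rewrite /bk.
have xn : x < n by have := B_n; lia.
have -> : (y < x) = false by lia.
have -> : (x < y) = true by lia.
rewrite /= => nE; rewrite (Htour xn yn) //; last by apply/eqP; lia.
Qed.

End Blk.

Definition Tnat (g : nat -> nat) m := forall i j, i < j -> j < m -> E (b + g i) (b + g j).
Definition Pnat (g : nat -> nat) m := forall i j, i < m -> j < m ->
  E (b + g i) (b + g j) = (i.+2 <= j) || (i == j.+1).

Lemma E_inv x y : x < n -> y < n -> inv x y -> E x y = (x < y) (+) bk x y.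
Proof.
move=> xn yn ixy; have nxy := inv_neq ixy.
rewrite /bk; case: (ltngtP x y) => h /=.
- exact: (Htour xn yn nxy).
- by rewrite orbF.
- by move: nxy; rewrite h eqxx.
Qed.

Section Path.
Variables (m : nat) (g fi : nat -> nat).
Hypothesis Hg_lt : forall i, i < m -> g i < m.
Hypothesis HgK : forall i, i < m -> g (g i) = i.
Hypothesis Hbm : b + m <= n.
Hypothesis Hqip : forall s, s < m -> qi (b + s) = b + fi s.
Hypothesis Hadj : forall i, i.+1 < m ->
  ((g i < g i.+1) && (fi (g i.+1) < fi (g i))) || ((g i.+1 < g i) && (fi (g i) < fi (g i.+1))).
Hypothesis Hfar : forall i j, i.+2 <= j -> j < m -> g i < g j /\ fi (g i) < fi (g j).
Hypothesis Halt : forall i, i.+2 < m -> (g i < g i.+1) = ~~ (g i.+1 < g i.+2).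

Local Notation w i := (b + g i).

Lemma g_inj i j : i < m -> j < m -> g i = g j -> i = j.
Proof. by move=> im jm e; rewrite -(HgK im) -(HgK jm) e. Qed.

Lemma w_n i : i < m -> w i < n. Proof. by move/Hg_lt; lia. Qed.

Lemma path_inv i : i.+1 < m -> inv (w i) (w i.+1).
Proof.
move=> h; have := Hadj h; rewrite /inv !Hqip; try (apply: Hg_lt; lia).
rewrite !ltn_add2l; by [].
Qed.

Lemma path_far i j : i.+2 <= j -> j < m -> ~~ inv (w i) (w j) /\ w i < w j.
Proof.
move=> h1 h2; have [A B] := Hfar h1 h2.
rewrite /inv !Hqip; try (apply: Hg_lt; lia).
split; last lia.
rewrite !ltn_add2l; apply/negP => /orP[] /andP[]; lia.
Qed.



Lemma path_D i : i.+2 < m -> E (w i.+1) (w i.+2) = E (w i) (w i.+1).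
Proof.
move=> h.
have i0 := @path_inv i ltac:(lia).
have i1 := @path_inv i.+1 h.
rewrite (E_inv (w_n _) (w_n _) i0); try lia.
rewrite (E_inv (w_n _) (w_n _) i1); try lia.
have d : bk (w i.+1) (w i) != bk (w i.+1) (w i.+2).
  apply: dclass; try (apply: w_n; lia).
  - apply/eqP => /addnI /g_inj; lia.
  - by rewrite inv_sym.
  - by [].
rewrite bk_sym in d.
have a := Halt h.
rewrite !ltn_add2l a.
by move: d; case: (bk _ _); case: (bk _ _); case: (g i.+1 < g i.+2).
Qed.

Lemma path_D0 i : i.+1 < m -> E (w i) (w i.+1) = E (w 0) (w 1).
Proof.
elim: i => [|i IH] h //.
by rewrite path_D // IH //; lia.
Qed.

Lemma path_Efar i j : i.+2 <= j -> j < m -> E (w i) (w j).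
Proof.
move=> h1 h2.
have [ni lt] := path_far h1 h2.
have xn := @w_n i ltac:(lia); have yn := w_n h2.
have nxy : w i != w j by apply/eqP => e; lia.
have zn := @w_n i.+1 ltac:(lia).
have iz := @path_inv i ltac:(lia).
rewrite (Htour xn yn nxy); apply/negP => Eji.
have Bij : bk (w i) (w j) by rewrite /bk lt Eji orbT.
have Bij' : bk' (w i) (w j) by rewrite -(ninv_bk xn yn nxy ni).
have nzj : w i.+1 != w j by apply/eqP => /addnI /g_inj; lia.
have e2 := inv_bk xn zn iz.
case Bz: (bk (w i) (w i.+1)) e2 => e2.
  by move: (HM xn zn yn Bz Bij) => e; rewrite e eqxx in nzj.
have Bz' : bk' (w i) (w i.+1) by move: e2; case: (bk' _ _).
by move: (HM' xn zn yn Bz' Bij') => e; rewrite e eqxx in nzj.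
Qed.

Lemma path_cond : Tnat g m \/ Pnat g m.
Proof.
case: (ltnP m 2) => hm.
  by left => i j h1 h2; lia.
case D0: (E (w 0) (w 1)); [left | right].
  move=> i j h1 h2; case: (eqVneq j i.+1) => [ej|ne].
    by subst j; rewrite path_D0 ?D0.
  by apply: path_Efar; lia.
move=> i j im jm.
case: (ltngtP i j) => h.
- case: (eqVneq j i.+1) => [ej|ne].
    by subst j; rewrite path_D0 // D0; lia.
  rewrite path_Efar //; [lia | lia].
- rewrite (Htour (w_n im) (w_n jm)); last by apply/eqP => /addnI /g_inj; lia.
  case: (eqVneq i j.+1) => [ei|ne].
    by subst i; rewrite path_D0 // D0; lia.
  rewrite path_Efar //; lia.
- subst j; rewrite (negbTE (Hirr (w_n im))); lia.
Qed.

Lemma path_partner : 1 < m ->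
  forall x, b <= x < b + m -> exists2 z, b <= z < b + m & inv x z.
Proof.
move=> hm x hx.
set i := g (x - b).
have im : i < m by apply: Hg_lt; lia.
have xe : x = w i by rewrite /i HgK; lia.
case: (ltnP i.+1 m) => h.
  exists (w i.+1); first by have := @Hg_lt i.+1 h; lia.
  by rewrite xe; apply: path_inv.
have i1 : 0 < i by lia.
exists (w i.-1); first by have := @Hg_lt i.-1 ltac:(lia); lia.
rewrite xe inv_sym; have := @path_inv i.-1; rewrite prednK //; apply; lia.
Qed.

End Path.

Lemma neS1 x : x != x.+1. Proof. apply/eqP; lia. Qed.
Lemma neS2 x : x != x.+2. Proof. apply/eqP; lia. Qed.
Lemma neS3 x : x != x.+3. Proof. apply/eqP; lia. Qed.

Lemma E_noninv x y z : x < n -> y < n -> z < n -> x < y -> ~~ inv x y -> inv x z ->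
  z != y -> E x y.
Proof.
move=> xn yn zn lt ni iz nzj.
have nxy : x != y by apply/eqP => e; lia.
rewrite (Htour xn yn nxy); apply/negP => Eji.
have Bij : bk x y by rewrite /bk lt Eji orbT.
have Bij' : bk' x y by rewrite -(ninv_bk xn yn nxy ni).
have e2 := inv_bk xn zn iz.
case Bz: (bk x z) e2 => e2.
  by move: (HM xn zn yn Bz Bij) => e; rewrite e eqxx in nzj.
have Bz' : bk' x z by move: e2; case: (bk' _ _).
by move: (HM' xn zn yn Bz' Bij') => e; rewrite e eqxx in nzj.
Qed.

Definition NatCond K m := match K with
  | KSig => Tnat (swap2 m) m \/ Pnat (swap2 m) m
  | KSigInv => Tnat (swap1 m) m \/ Pnat (swap1 m) m
  | KTau => m = 4 /\ (Pnat (swap2 4) 4 \/ Pnat inv21 4)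
  end.

Lemma tau_cond : Blk KTau 4 -> Pnat (swap2 4) 4 \/ Pnat inv21 4.
Proof.
move=> HB.
have bn := B_n HB.
have Q : forall s, s < 4 -> qi (b + s) = b + tauf s by move=> s hs; rewrite (B_qi HB hs).
have q0 := Q 0 erefl; have q1 := Q 1 erefl; have q2 := Q 2 erefl; have q3 := Q 3 erefl.
rewrite /tauf /= addn0 ?addn1 ?addn2 ?addn3 in q0 q1 q2 q3.
have n0 : b < n by lia.
have n1 : b.+1 < n by lia.
have n2 : b.+2 < n by lia.
have n3 : b.+3 < n by lia.
have i02 : inv b b.+2 by apply: invP; lia.
have i03 : inv b b.+3 by apply: invP; lia.
have i12 : inv b.+1 b.+2 by apply: invP; lia.
have i13 : inv b.+1 b.+3 by apply: invP; lia.
have N01 : ~~ inv b b.+1 by rewrite /inv; lia.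
have N23 : ~~ inv b.+2 b.+3 by rewrite /inv; lia.
have r : forall x y, x < n -> y < n -> x != y -> E y x = ~~ E x y.
  by move=> x y xn yn nxy; rewrite (Htour yn xn) // eq_sym.
have f10 : E b.+1 b = ~~ E b b.+1 by apply: r => //; rewrite ?neS1 ?neS2 ?neS3.
have f20 : E b.+2 b = ~~ E b b.+2 by apply: r => //; rewrite ?neS1 ?neS2 ?neS3.
have f30 : E b.+3 b = ~~ E b b.+3 by apply: r => //; rewrite ?neS1 ?neS2 ?neS3.
have f21 : E b.+2 b.+1 = ~~ E b.+1 b.+2 by apply: r => //; rewrite ?neS1 ?neS2 ?neS3.
have f31 : E b.+3 b.+1 = ~~ E b.+1 b.+3 by apply: r => //; rewrite ?neS1 ?neS2 ?neS3.
have f32 : E b.+3 b.+2 = ~~ E b.+2 b.+3 by apply: r => //; rewrite ?neS1 ?neS2 ?neS3.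
have e01 : E b b.+1 by apply: (@E_noninv _ _ b.+2) => //; rewrite eq_sym neS1.
have e23 : E b.+2 b.+3.
  by apply: (@E_noninv _ _ b) => //; [rewrite inv_sym | rewrite neS3].
have e02 := E_inv n0 n2 i02; have e03 := E_inv n0 n3 i03.
have e12 := E_inv n1 n2 i12; have e13 := E_inv n1 n3 i13.
have d0 := @dclass b b.+2 b.+3 n0 n2 n3 (neS1 _) i02 i03.
have i20 : inv b.+2 b by rewrite inv_sym.
have i21 : inv b.+2 b.+1 by rewrite inv_sym.
have nb1 : b != b.+1 := neS1 b.
have d2 := @dclass b.+2 b b.+1 n2 n0 n1 nb1 i20 i21.
have d1 := @dclass b.+1 b.+2 b.+3 n1 n2 n3 (neS1 _) i12 i13.
rewrite (bk_sym b.+2 b) (bk_sym b.+2 b.+1) in d2.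
have z0 := negbTE (Hirr n0); have z1 := negbTE (Hirr n1).
have z2 := negbTE (Hirr n2); have z3 := negbTE (Hirr n3).
have lt02 : b < b.+2 by apply: leqW.
have lt03 : b < b.+3 by apply: leqW; apply: leqW. have lt12 : b.+1 < b.+2 by [].
have lt13 : b.+1 < b.+3 by apply: leqW.
rewrite lt02 in e02; rewrite lt03 in e03; rewrite lt12 in e12; rewrite lt13 in e13.
have nb : forall a c : bool, a != c -> c = ~~ a by case; case.
have h3 := nb _ _ d0.
have h12 := nb _ _ d2.
have h13 := nb _ _ d1.
rewrite h12 in h13.
rewrite h3 in e03; rewrite h12 in e12; rewrite h13 in e13.
move: e02 e03 e12 e13.
case: (bk b b.+2) => /= e02 e03 e12 e13; [left | right]; move=> i j hi hj;
  (case: i hi => [|[|[|[|i]]]] hi //); (case: j hj => [|[|[|[|j]]]] hj //);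
  rewrite /= ?addn0 ?addn1 ?addn2 ?addn3 ?f10 ?f20 ?f30 ?f21 ?f31 ?f32 ?e01 ?e23 ?e02 ?e03 ?e12 ?e13 ?z0 ?z1 ?z2 ?z3 //.
Qed.

Lemma B_cond K m : Blk K m -> NatCond K m.
Proof.
move=> HB; case: K HB => HB /=.
- apply: (@path_cond m (swap2 m) (sigif m)).
  all: try (move=> ? ?; exact: swap2_lt); try (move=> ? ?; exact: swap2K).
  all: try exact: (B_n HB); try (move=> s hs; exact: (B_qi HB hs)).
  all: try exact: sig_adj; try exact: sig_far; try exact: sig_alt.
- apply: (@path_cond m (swap1 m) (sigf m)).
  all: try (move=> ? ?; exact: swap1_lt); try (move=> ? ?; exact: swap1K).
  all: try exact: (B_n HB); try (move=> s hs; exact: (B_qi HB hs)).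
  all: try exact: sigi_adj; try exact: sigi_far; try exact: sigi_alt.
- have m4 := B_tau HB erefl; subst m; split => //; exact: tau_cond.
Qed.

Lemma B_hom K m : Blk K m -> forall y, y < n -> ~~ (b <= y < b + m) ->
    (forall x, b <= x < b + m -> E y x) \/ (forall x, b <= x < b + m -> E x y).
Proof.
move=> HB y yn hy.
have bm := B_n HB; have m0 := B_m HB.
case: (ltnP m 2) => hm.
  have m1 : m = 1 by lia.
  have bn : b < n by lia.
  have nby : b != y by apply/eqP => e; rewrite -e in hy; lia.
  case Eyb: (E y b); [left | right] => x hx; have -> : x = b by lia.
    by [].
  by rewrite (Htour bn yn nby) Eyb.
apply: (B_hom_partner HB) => //.
case: K HB => HB.
- apply: (@path_partner m (swap2 m) (sigif m)) => //.
  all: try (move=> ? ?; exact: swap2_lt); try (move=> ? ?; exact: swap2K).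
  all: try exact: (B_n HB); try (move=> s hs; exact: (B_qi HB hs)).
  all: try exact: sig_adj; try exact: sig_far; try exact: sig_alt.
- apply: (@path_partner m (swap1 m) (sigf m)) => //.
  all: try (move=> ? ?; exact: swap1_lt); try (move=> ? ?; exact: swap1K).
  all: try exact: (B_n HB); try (move=> s hs; exact: (B_qi HB hs)).
  all: try exact: sigi_adj; try exact: sigi_far; try exact: sigi_alt.
- have m4 := B_tau HB erefl; subst m.
  have Q : forall s, s < 4 -> qi (b + s) = b + tauf s by move=> s hs; rewrite (B_qi HB hs).
  have q0 := Q 0 erefl; have q1 := Q 1 erefl; have q2 := Q 2 erefl; have q3 := Q 3 erefl.
  rewrite /tauf /= addn0 ?addn1 ?addn2 ?addn3 in q0 q1 q2 q3.
  move=> x hx.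
  case: (ltnP x b.+2) => h.
    exists b.+2; first lia.
    have [->|->] : x = b \/ x = b.+1 by lia.
      by apply: invP; lia.
    by apply: invP; lia.
  exists b; first lia.
  have [->|->] : x = b.+2 \/ x = b.+3 by lia.
    by rewrite inv_sym; apply: invP; lia.
  by rewrite inv_sym; apply: invP; lia.
Qed.

End Start.

Lemma block_fun_out B x : ~~ in_block B x -> (bkind B = KTau -> bsize B = 4) ->
  block_fun B x = x.
Proof.
case: B => b m K /= h ht; rewrite /block_fun /=.
case: K h ht => h ht /=; [exact: sigma_fun_out | exact: sigma_inv_fun_out|].
apply: tau_fun_out; move: h; rewrite /in_block /= (ht erefl); exact.
Qed.

Lemma block_fun_in B x : in_block B x -> (bkind B = KTau -> bsize B = 4) ->
  block_fun B x = bstart B + fK (bkind B) (bsize B) (x - bstart B).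
Proof.
case: B => b m K /= h ht; rewrite /block_fun /=.
case: K h ht => h ht /=; [exact: sigma_fun_in | exact: sigma_inv_fun_in|].
move: h; rewrite /in_block /= (ht erefl) => h; exact: tau_fun_in.
Qed.

Definition HomNat b m := forall y, y < n -> ~~ (b <= y < b + m) ->
    (forall x, b <= x < b + m -> E y x) \/ (forall x, b <= x < b + m -> E x y).

Definition bfold (bl : seq block) := foldr (fun B f => block_fun B \o f) id bl.

Lemma rec fuel : forall b, n - b <= fuel -> b <= n ->
  (forall k, k < b -> q k < b) -> (forall y, y < b -> qi y < b) ->
  exists bl : seq block,
    (forall B, List.In B bl -> b <= bstart B /\ 0 < bsize B /\ bstart B + bsize B <= n /\
        (bkind B = KTau -> bsize B = 4)) /\
    (forall x, count (fun B => in_block B x) bl = (b <= x < n)) /\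
    (forall x, b <= x < n -> q x = bfold bl x) /\
    (forall x, x < b -> bfold bl x = x) /\
    (forall B, List.In B bl -> HomNat (bstart B) (bsize B) /\
        NatCond (bstart B) (bkind B) (bsize B)).
Proof.
elim: fuel => [|fuel IH] b hf bn H1 H2.
  have e : b = n by lia.
  exists [::]; split => //; split.
    by move=> x /=; rewrite e; have -> : (n <= x < n) = false by apply/negP => /andP[]; lia.
  split; first lia.
  by split.
case: (ltnP b n) => bn'; last first.
  have e : b = n by lia.
  exists [::]; split => //; split.
    by move=> x /=; rewrite e; have -> : (n <= x < n) = false by apply/negP => /andP[]; lia.
  split; first lia.
  by split.
have [K [m HB]] := start H1 H2 bn'.
have m0 := B_m H1 H2 HB; have bm := B_n H1 H2 HB; have mt := B_tau H1 H2 HB.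
have F1 : forall k, k < b + m -> q k < b + m by move=> k; apply: (B_fix1 H1 H2 HB).
have F2 : forall y, y < b + m -> qi y < b + m by move=> y; apply: (B_fix2 H1 H2 HB).
have [rest [R1 [R2 [R3 [R4 R5]]]]] := IH (b + m) ltac:(lia) bm F1 F2.
exists (Block b m K :: rest); split; [|split; [|split; [|split]]].
- move=> B /= [<-|iB] /=; first by split; [|split; [|split]] => //.
  by have [h1 [h2 [h3 h4]]] := R1 B iB; split => //; lia.
- move=> x /=; rewrite R2 /in_block /=.
  case: (boolP (b <= x)) => ?; case: (boolP (x < b + m)) => ?;
    case: (boolP (b + m <= x)) => ?; case: (boolP (x < n)) => ? /=; lia.
- move=> x hx; rewrite /bfold /= -/(bfold rest).
  case: (ltnP x (b + m)) => h.
    rewrite R4 // block_fun_in //=; last by rewrite /in_block /=; lia.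
    have -> : x = b + (x - b) by lia.
    by rewrite (B_q H1 H2 HB) ?addKn //; lia.
  rewrite -R3; last lia.
  rewrite block_fun_out //= /in_block /=.
  have : b + m <= q x by apply: (q_geb F1 F2); lia.
  lia.
- move=> x hx; rewrite /bfold /= -/(bfold rest) R4; last lia.
  by rewrite block_fun_out //= /in_block /=; lia.
- move=> B /= [<-|iB]; last exact: R5.
  split; [exact: (B_hom H1 H2 HB) | exact: (B_cond H1 H2 HB)].
Qed.

End Comb.

Section Final.
Variables (T : finType) (e : rel T) (n' : nat) (v : 'I_n'.+1 -> T).
Local Notation n := n'.+1.
Hypothesis vinj : injective v.

Definition En (x y : nat) := e (v (inord x)) (v (inord y)).

Lemma mk_u b m (g h : nat -> nat) (K : skind) :
  b + m <= n ->
  (forall k, k < m -> g k < m /\ h k < m /\ g (h k) = k /\ h (g k) = k) ->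
  exists u : 'I_m -> T,
    ordering_of (block_set v (Block b m K)) u /\
    (forall i j : 'I_m, e (u i) (u j) = En (b + g i) (b + g j)) /\
    (forall k, k < m -> at_ v (b + k) = at_ u (h k)).
Proof.
move=> bm Hg.
exists (fun k : 'I_m => v (inord (b + g k))).
split; [split|split].
- move=> i j /vinj /(congr1 (@nat_of_ord _)).
  have [gi _] := Hg i (ltn_ord i); have [gj _] := Hg j (ltn_ord j).
  rewrite !inordK; try lia.
  move/addnI => eg; apply: val_inj => /=.
  have [_ [_ [_ hi]]] := Hg i (ltn_ord i); have [_ [_ [_ hj]]] := Hg j (ltn_ord j).
  by rewrite -hi -hj eg.
- apply/setP => t; apply/imsetP/imsetP.
  + move=> [k _ ->]; exists (inord (b + g k)) => //.
    have [gk _] := Hg k (ltn_ord k).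
    by rewrite inE /in_block /= inordK; lia.
  + move=> [j]; rewrite inE /in_block /= => hj ->.
    have jm : j - b < m by lia.
    have [_ [hk [ghk _]]] := Hg (j - b) jm.
    exists (Ordinal hk) => //=.
    congr v; apply: val_inj => /=; rewrite ghk inordK; lia.
- by move=> i j.
- move=> k km; rewrite /at_.
  have [_ [hk [ghk _]]] := Hg k km.
  rewrite !insubT; try lia.
  move=> p1 /=; congr (Some (v _)); apply: val_inj => /=.
  by rewrite ghk inordK //; lia.
Qed.
End Final.

Lemma swap21_ok k : k < 4 ->
  inv21 k < 4 /\ swap21 k < 4 /\ inv21 (swap21 k) = k /\ swap21 (inv21 k) = k.
Proof. by case: k => [|[|[|[|k]]]]. Qed.

Theorem theorem5p4 (T : finType) (e : rel T) (n : nat) (v : 'I_n -> T)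
    (pi : {perm 'I_n}) :
  tournament e ->
  matching_ordering e v ->
  matching_ordering e (fun i => v (pi i)) ->
  exists blocks : seq block,
    (forall B, List.In B blocks -> 0 < bsize B /\ bstart B + bsize B <= n) /\
    (forall x, x < n -> count (fun B => in_block B x) blocks = 1) /\
    (forall x : 'I_n,
        val (pi x) = foldr (fun B f => block_fun B \o f) id blocks (val x)) /\
    (forall B, List.In B blocks -> homogeneous e (block_set v B)) /\
    (forall B, List.In B blocks -> block_cond e v B).
Proof.
move=> [Tpos [Tirr Ttour]] [[g vK gK] Mv] [_ Mp].
have [t _] : exists t : T, true by move/card_gt0P: Tpos => [t _]; exists t.
case: n v pi g vK gK Mv Mp => [|n'] v pi g vK gK Mv Mp; first by case: (g t).
pose n := n'.+1.
have vinj : injective v := can_inj vK.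
pose q k := if k < n then val (pi (inord k)) else k.
pose qi k := if k < n then val ((pi^-1)%g (inord k)) else k.
pose E := En e v.
have Hq : forall k, k < n -> q k < n by move=> k kn; rewrite /q kn; exact: ltn_ord.
have Hqi : forall y, y < n -> qi y < n by move=> k kn; rewrite /qi kn; exact: ltn_ord.
have Hqqi : forall y, y < n -> q (qi y) = y.
  move=> y yn; rewrite /q /qi yn ltn_ord inord_val permKV /= inordK //.
have Hqiq : forall k, k < n -> qi (q k) = k.
  move=> y yn; rewrite /q /qi yn ltn_ord inord_val permK /= inordK //.
have inord_inj : forall x y, x < n -> y < n -> inord x = inord y :> 'I_n -> x = y.
  by move=> x y xn yn /(congr1 (@nat_of_ord _)); rewrite !inordK.
have Htour : forall x y, x < n -> y < n -> x != y -> E x y = ~~ E y x.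
  move=> x y xn yn nxy; rewrite /E /En.
  have ne : v (inord x) != v (inord y).
    by apply/eqP => /vinj /(inord_inj _ _ xn yn) exy; rewrite exy eqxx in nxy.
  by move: (Ttour _ _ ne); case: (e _ _); case: (e _ _).
have Hirr : forall x, x < n -> ~~ E x x by move=> x _; exact: Tirr.
have HM : forall x y z, x < n -> y < n -> z < n -> bk E x y -> bk E x z -> y = z.
  move=> x y z xn yn zn By Bz.
  have := Mv (inord x) => /card_le1_eqP H.
  have : inord y = inord z :> 'I_n.
    by apply: H; rewrite inE !inordK.
  exact: inord_inj.
have piq : forall x, x < n -> pi (inord (qi x)) = inord x.
  move=> x xn; apply: val_inj; rewrite /= -/(q (qi x)).
  have -> : val (pi (inord (qi x))) = q (qi x) by rewrite /q Hqi.
  by rewrite Hqqi // inordK.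
have HM' : forall x y z, x < n -> y < n -> z < n -> bk' qi E x y -> bk' qi E x z -> y = z.
  move=> x y z xn yn zn By Bz.
  have := Mp (inord (qi x)) => /card_le1_eqP H.
  have : inord (qi y) = inord (qi z) :> 'I_n.
    apply: H; rewrite inE !inordK ?Hqi // !piq //.
  move/(inord_inj _ _ (Hqi _ yn) (Hqi _ zn)).
  by move/(congr1 q); rewrite !Hqqi.
have [bl [R1 [R2 [R3 [R4 R5]]]]] :=
  @rec n q qi E Hq Hqi Hqqi Hqiq Htour Hirr HM HM' n 0 ltac:(lia) ltac:(lia)
    ltac:(by []) ltac:(by []).
exists bl; split; [|split; [|split; [|split]]].
- by move=> B /R1; lia.
- by move=> x xn; rewrite R2 xn.
- move=> x; have := R3 x; rewrite /bfold => <- //; last by rewrite ltn_ord.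
  by rewrite /q ltn_ord inord_val.
- move=> [b m K] /R5 [Hh _] y; rewrite /homogeneous.
  move=> ny.
  have yj : y = v (g y) by rewrite gK.
  have nb : ~~ (b <= g y < b + m).
    apply/negP => hb; move: ny; rewrite yj; apply/negP/negPn.
    by apply: imset_f; rewrite inE /in_block.
  have [L|R] := Hh (g y) (ltn_ord _) nb; [left|right] => x /imsetP [j];
    rewrite inE /in_block /= => hj ->.
    by have := L j hj; rewrite /E /En !inord_val -yj.
  by have := R j hj; rewrite /E /En !inord_val -yj.
- move=> [b m K] iB; have [_ [_ [bm _]]] := R1 _ iB; have [_ C] := R5 _ iB.
  move: C bm; rewrite /block_cond /=.
  case: K iB => iB /= C bm.
  + have [u [ou [Eu au]]] := @mk_u T e n' v vinj b m (swap2 m) (swap2 m) KSig bm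
      (fun k km => conj (swap2_lt km) (conj (swap2_lt km) (conj (swap2K km) (swap2K km)))).
    exists u; split => //; split => //.
    case: C => [C|C]; [left => i j hij | right => i j]; rewrite Eu.
      exact: C.
    exact: C.
  + have [u [ou [Eu au]]] := @mk_u T e n' v vinj b m (swap1 m) (swap1 m) KSigInv bm
      (fun k km => conj (swap1_lt km) (conj (swap1_lt km) (conj (swap1K km) (swap1K km)))).
    exists u; split => //; split => //.
    case: C => [C|C]; [left => i j hij | right => i j]; rewrite Eu.
      exact: C.
    exact: C.
  + case: C => m4 C; subst m; split => //.
    case: C => C.
      have [u [ou [Eu au]]] := @mk_u T e n' v vinj b 4 (swap2 4) (swap2 4) KTau bm
        (fun k km => conj (swap2_lt km) (conj (swap2_lt km) (conj (swap2K km) (swap2K km)))).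
      exists u; split => //; split; last by left.
      by move=> i j; rewrite Eu; apply: C.
    have [u [ou [Eu au]]] := @mk_u T e n' v vinj b 4 inv21 swap21 KTau bm swap21_ok.
    exists u; split => //; split; last by right.
    by move=> i j; rewrite Eu; apply: C.
Qed.
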